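(* Let $m$ be a nonnegative integer and $F$ a distribution function with finite $m$-th absolute moment. In $(\mathbb R_m[\mathrm D],\circ)$, $$\mathsf L_{F,m}^{-1}=\sum_{k=0}^m(\mathrm{Id}-\mathsf L_{F,m})^{\circ k}=\sum_{j=0}^m(-1)^j\mathsf L_{F,m}^{\circ j}\sum_{k=j}^m\binom{k}{j}.$$
   Context: $(\mathbb R_m[\mathrm D],\circ)$ is the ring of polynomials in $\mathrm D$ of degree at most $m$ with multiplication of polynomials modulo $\mathrm D^{m+1}$; $\mathrm{Id}$ is its unit $\mathrm D^0$. For $T$ in this ring, $T^{\circ0}=\mathrm{Id}$ and $T^{\circ k}=T\circ T^{\circ(k-1)}$. $\mu_{F,k}=\int x^k\,dF(x)$ and $\mathsf L_{F,m}=\sum_{k=0}^m\frac{(-1)^k}{k!}\mu_{F,k}\mathrm D^k$. *)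

(* Defs.v *)
From HB Require Import structures.
From mathcomp Require Import all_boot all_order all_algebra.
From mathcomp Require Import all_classical all_reals all_analysis.
Set Implicit Arguments. Unset Strict Implicit. Unset Printing Implicit Defensive.
Import Order.TTheory GRing.Theory Num.Theory.
Local Open Scope ring_scope.

(* The ring (R_m[D], o): elements are polynomials in D (represented by {poly R},
   the indeterminate 'X playing the role of D) of degree at most m; the product
   is the polynomial product truncated modulo D^(m+1). *)
Definition tmul {R : comRingType} (m : nat) (p q : {poly R}) : {poly R} :=
  \poly_(i < m.+1) (p * q)`_i.

Definition tpow {R : comRingType} (m : nat) (T : {poly R}) (k : nat) : {poly R} :=
  iter k (tmul m T) 1.

(* Distribution functions = nondecreasing right-continuous functions with limits
   0 at -oo and 1 at +oo: the library type [cumulativeBounded 0 1].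
   dF is the Lebesgue-Stieltjes measure of F. *)
Definition dF {R : realType} (F : cumulativeBounded (0:R) (1:R)) :=
  lebesgue_stieltjes_measure F.

Definition moment {R : realType} (F : cumulativeBounded (0:R) (1:R)) (k : nat) : R :=
  Rintegral (dF F) setT (fun x => x ^+ k).

Definition LF {R : realType} (F : cumulativeBounded (0:R) (1:R)) (m : nat) : {poly R} :=
  \poly_(k < m.+1) ((-1) ^+ k / (k`!)%:R * moment F k).

(* Main.v *)
Require Import Defs.
From HB Require Import structures.
From mathcomp Require Import all_boot all_order all_algebra.
From mathcomp Require Import all_classical all_reals all_analysis.
Import Order.TTheory GRing.Theory Num.Theory.
From mathcomp Require Import ring.
Local Open Scope ring_scope.


Lemma tmulE (K : fieldType) (m : nat) (p q : {poly K}) : tmul m p q = (p * q) %% 'X^(m.+1).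
Proof. by rewrite -Pdiv.IdomainMonic.take_poly_modp. Qed.

Lemma mod1 (K : fieldType) (m : nat) : (1 : {poly K}) %% 'X^(m.+1) = 1.
Proof. by rewrite modp_small // size_polyXn size_poly1. Qed.

Lemma tpowE (K : fieldType) (m : nat) (p : {poly K}) k : tpow m p k = (p ^+ k) %% 'X^(m.+1).
Proof.
elim: k => [|k IH]; first by rewrite /tpow /= expr0 mod1.
by rewrite /tpow iterS -/(tpow m p k) IH tmulE modp_mul -exprS.
Qed.

Lemma modp_sumE (K : fieldType) (m : nat) (I : Type) (r : seq I) (F : I -> {poly K}) :
  (\sum_(i <- r) F i) %% 'X^(m.+1) = \sum_(i <- r) (F i %% 'X^(m.+1)).
Proof. exact: (big_morph (fun p => p %% 'X^(m.+1)) (modpD 'X^(m.+1)) (mod0p 'X^(m.+1))). Qed.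

Lemma key (K : fieldType) (m : nat) (L : {poly K}) : L`_0 = 1 ->
  let S := \sum_(k < m.+1) tpow m (1 - L) k in
  [/\ tmul m L S = 1, tmul m S L = 1 &
      S = \sum_(j < m.+1)
            (((-1) ^+ j * (\sum_(j <= k < m.+1) 'C(k, j))%:R) *: tpow m L j)].
Proof.
move=> L0 S.
set N := 1 - L.
have hS : S = (\sum_(k < m.+1) N ^+ k) %% 'X^(m.+1).
  by rewrite modp_sumE /S; apply: eq_bigr => k _; rewrite tpowE.
have dN : 'X^(m.+1) %| N ^+ m.+1.
  apply: dvdp_exp2r.
  have := dvdp_XsubCl N 0; rewrite polyC0 subr0 => ->.
  by rewrite /root horner_coef0 /N coefB coef1 L0 subrr.
have NN : N ^+ m.+1 %% 'X^(m.+1) = 0 by apply: modp_eq0.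
have LP : L * (\sum_(k < m.+1) N ^+ k) = 1 - N ^+ m.+1.
  have -> : L = - (N - 1) by rewrite /N; ring.
  by rewrite mulNr -subrX1 opprB.
have inv1 : tmul m L S = 1.
  by rewrite tmulE hS modp_mul LP modpD modpN NN subr0 mod1.
split => //; first by rewrite /tmul mulrC.
under [RHS]eq_bigr do rewrite tpowE -modpZl.
rewrite -modp_sumE hS; congr (_ %% _).
have e1 : forall k : 'I_m.+1, N ^+ k = \sum_(i < m.+1) (- L) ^+ i *+ 'C(k, i).
  move=> k; rewrite /N addrC exprD1n (big_ord_widen m.+1 (fun i => (- L) ^+ i *+ 'C(k, i))) //.
  rewrite big_mkcond /=; apply: eq_bigr => i _.
  case: ifP => // /negbT; rewrite -leqNgt => hi.
  by rewrite bin_small // mulr0n.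
under eq_bigr do rewrite e1.
rewrite exchange_big /=; apply: eq_bigr => j _.
rewrite sumrMnr.
have -> : (\sum_(i < m.+1) 'C(i, j))%N = (\sum_(j <= k < m.+1) 'C(k, j))%N.
  rewrite -(big_mkord xpredT (fun i => 'C(i, j))) (big_cat_nat _ (n:=j)) //=; last exact: ltnW.
  rewrite big_nat_cond big1 ?add0n // => i /andP [/andP [_ hi] _].
  by rewrite bin_small.
rewrite -scalerA scaler_nat.
by rewrite -mul_polyC rmorphXn rmorphN1 mulrnAr -exprNn.
Qed.

Lemma moment0 (R : realType) (F : cumulativeBounded (0:R) (1:R)) : moment F 0 = 1.
Proof.
rewrite /moment.
under eq_fun do rewrite expr0.
rewrite Rintegral_cst //.
have H : dF F setT = 1%E.
  exact: (@probability_setT _ _ _ (lebesgue_stieltjes_measure F)).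
rewrite mul1r; exact: (congr1 fine H).
Qed.


Theorem proposition2p1p3 (R : realType) (m : nat)
    (F : cumulativeBounded (0:R) (1:R))
    (hF : (\int[dF F]_x ((`|x| ^+ m)%:E) < +oo)%E) :
  let L := LF F m in
  let S := \sum_(k < m.+1) tpow m (1 - L) k in
  [/\ tmul m L S = 1, tmul m S L = 1 &
      S = \sum_(j < m.+1)
            (((-1) ^+ j * (\sum_(j <= k < m.+1) 'C(k, j))%:R) *: tpow m L j)].
Proof.
apply: key.
by rewrite /LF coef_poly /= expr0 moment0 fact0 div1r invr1 mul1r.
Qed.
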